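(* Let $\alpha\in\mathbb{R}$, let $p$ be a positive integer, $a\in\mathbb{R}$, and let $f$ be defined only on $\mathbb{N}_a$. Then for all $t\in\mathbb{N}_{a+2p-1}$, $$\nabla_{a+p-1}^{-\alpha}\nabla^p f(t)=\nabla^p\nabla_{a+p-1}^{-\alpha}f(t)-\sum_{k=0}^{p-1}\frac{(t-(a+p-1))^{\overline{\alpha-p+k}}}{\Gamma(\alpha+k-p+1)}\nabla^k f(a+p-1).$$
   Context: Notation: $\mathbb{N}_c=\{c,c+1,\dots\}$, $\rho(t)=t-1$, $\nabla g(t)=g(t)-g(t-1)$, $\nabla^m=\nabla(\nabla^{m-1})$. Rising factorial: $t^{\overline{\beta}}=\Gamma(t+\beta)/\Gamma(t)$ with $0^{\overline{\beta}}=0$; the reciprocal of $\Gamma$ at a pole is $0$. For $\gamma>0$ and starting point $c$, the nabla left fractional sum is $\nabla_c^{-\gamma}g(t)=\frac{1}{\Gamma(\gamma)}\sum_{s=c+1}^{t}(t-\rho(s))^{\overline{\gamma-1}}g(s)$, a sum with upper limit smaller than lower limit being $0$. For $\beta>0$ let $n=[\beta]+1$ with $[\beta]$ the greatest integer strictly less than $\beta$; the nabla left fractional difference is $\nabla_c^{\beta}g(t)=\nabla^n\nabla_c^{-(n-\beta)}g(t)$ (order-$0$ operator = identity). For $\alpha<0$, $\nabla_c^{-\alpha}$ denotes the nabla left fractional difference of order $-\alpha$; for $\alpha=0$ the identity. *)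

(* Defs.v *)
From Stdlib Require Import Reals Lra Lia ZArith Arith List ClassicalEpsilon.
Open Scope R_scope.

(** Reciprocal Gamma function 1/Γ, via Gauss's product formula
    Γ(x) = lim_{N->oo} N! N^x / (x (x+1) ... (x+N)),
    i.e. 1/Γ(x) = lim_{N->oo} x (x+1) ... (x+N) / (N! N^x)   (N >= 1).
    This limit exists for every real x (1/Γ is entire) and is 0 exactly at
    the poles 0,-1,-2,... of Γ, matching the convention "1/Γ(pole) = 0". *)
Definition gauss_rgamma_seq (x : R) (n : nat) : R :=
  prod_f_R0 (fun j => x + INR j) (S n) / (INR (fact (S n)) * Rpower (INR (S n)) x).

Definition rgamma (x : R) : R :=
  epsilon (inhabits 0) (fun l => Un_cv (gauss_rgamma_seq x) l).

(** Rising factorial t^{(β)} = Γ(t+β)/Γ(t) = (1/Γ(t)) / (1/Γ(t+β)),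
    with 0^{(β)} = 0.  (In Stdlib, / 0 = 0.) *)
Definition rising (t beta : R) : R :=
  if Req_EM_T t 0 then 0 else rgamma t / rgamma (t + beta).

Fixpoint rsum (n : nat) (F : nat -> R) : R :=
  match n with
  | O => 0
  | S m => rsum m F + F (S m)
  end.

Definition nabla (g : R -> R) (t : R) : R := g t - g (t - 1).

Fixpoint nabla_pow (m : nat) (g : R -> R) : R -> R :=
  match m with
  | O => g
  | S k => nabla (nabla_pow k g)
  end.

(** Number of lattice points s in c+1, c+2, ... with s <= t
    (= t - c for t in N_c, 0 if t < c+1). *)
Definition npoints (c t : R) : nat := Z.to_nat (Int_part (t - c)).

(** Nabla left fractional sum of order γ > 0 with starting point c:
    ∇_c^{-γ} g(t) = 1/Γ(γ) Σ_{s=c+1}^{t} (t - ρ(s))^{(γ-1)} g(s). *)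
Definition nabla_frac_sum (c gamma : R) (g : R -> R) (t : R) : R :=
  rgamma gamma *
  rsum (npoints c t)
       (fun j => rising (t - (c + INR j - 1)) (gamma - 1) * g (c + INR j)).

Definition nabla_frac_sum0 (c gamma : R) (g : R -> R) : R -> R :=
  if Req_EM_T gamma 0 then g else nabla_frac_sum c gamma g.

(** [β] = the greatest integer strictly less than β  (= - up(-β)). *)
Definition greatest_int_lt (beta : R) : Z := (- up (- beta))%Z.

Definition nabla_frac_diff (c beta : R) (g : R -> R) : R -> R :=
  let n := Z.to_nat (greatest_int_lt beta + 1) in
  nabla_pow n (nabla_frac_sum0 c (INR n - beta) g).

(** The operator written ∇_c^{-α} in the paper, for any real α:
    α > 0: fractional sum of order α; α = 0: identity;
    α < 0: fractional difference of order -α. *)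
Definition nabla_left (c alpha : R) (g : R -> R) : R -> R :=
  match Rlt_dec 0 alpha with
  | left _ => nabla_frac_sum c alpha g
  | right _ =>
      if Req_EM_T alpha 0 then g else nabla_frac_diff c (- alpha) g
  end.

(* Main.v *)
Require Import Defs.
From Stdlib Require Import Reals Lra Lia ZArith ClassicalEpsilon FunctionalExtensionality.
From Coquelicot Require Import Coquelicot.
Open Scope R_scope.

Lemma prod_shift x k : prod_f_R0 (fun j => x + INR j) (S k) = x * prod_f_R0 (fun j => x + 1 + INR j) k.
Proof.
  induction k.
  - simpl. ring.
  - change (prod_f_R0 (fun j => x + INR j) (S (S k))) with
      (prod_f_R0 (fun j => x + INR j) (S k) * (x + INR (S (S k)))).
    rewrite IHk. change (prod_f_R0 (fun j => x + 1 + INR j) (S k)) with (prod_f_R0 (fun j => x + 1 + INR j) k * (x + 1 + INR (S k))). rewrite !S_INR. ring.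
Qed.

Lemma Rpower_pos y x : 0 < Rpower y x.
Proof. unfold Rpower. apply exp_pos. Qed.

Lemma INR_fact_pos n : 0 < INR (fact n).
Proof. apply lt_0_INR. apply lt_O_fact. Qed.

Lemma gauss_rec x n : gauss_rgamma_seq x n * (x + INR n + 2) = x * gauss_rgamma_seq (x+1) n * (INR n + 1).
Proof.
  unfold gauss_rgamma_seq.
  rewrite prod_shift.
  change (prod_f_R0 (fun j => x + 1 + INR j) (S n)) with
      (prod_f_R0 (fun j => x + 1 + INR j) n * (x + 1 + INR (S n))).
  rewrite Rpower_plus, Rpower_1 by (apply lt_0_INR; lia).
  assert (H1 := INR_fact_pos (S n)). assert (H2 := Rpower_pos (INR (S n)) x).
  assert (H3 : 0 < INR (S n)) by (apply lt_0_INR; lia).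
  rewrite S_INR in *. field. split; lra.
Qed.

Lemma ln_le_sub1 y : 0 < y -> ln y <= y - 1.
Proof. intros Hy. assert (H := exp_ineq1_le (ln y)). rewrite exp_ln in H; lra. Qed.

Lemma prod_nonneg x k : 0 <= x -> 0 <= prod_f_R0 (fun j => x + INR j) k.
Proof.
  intros Hx. induction k.
  - simpl. lra.
  - change (prod_f_R0 (fun j => x + INR j) (S k)) with (prod_f_R0 (fun j => x + INR j) k * (x + INR (S k))).
    apply Rmult_le_pos; auto. assert (0 <= INR (S k)) by apply pos_INR. lra.
Qed.

Lemma gauss_nonneg x n : 0 <= x -> 0 <= gauss_rgamma_seq x n.
Proof.
  intros Hx. unfold gauss_rgamma_seq.
  assert (H1 := INR_fact_pos (S n)). assert (H2 := Rpower_pos (INR (S n)) x).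
  apply Rmult_le_pos.
  - apply prod_nonneg; auto.
  - left. apply Rinv_0_lt_compat. apply Rmult_lt_0_compat; auto.
Qed.

Lemma gauss_decr x : 0 <= x -> Un_decreasing (gauss_rgamma_seq x).
Proof.
  intros Hx n. unfold gauss_rgamma_seq.
  change (prod_f_R0 (fun j => x + INR j) (S (S n))) with
      (prod_f_R0 (fun j => x + INR j) (S n) * (x + INR (S (S n)))).
  set (P := prod_f_R0 (fun j => x + INR j) (S n)).
  assert (HP : 0 <= P).
  { unfold P. apply prod_nonneg; auto. }
  rewrite fact_simpl, mult_INR.
  set (F := INR (fact (S n))).
  assert (HF : 0 < F) by apply INR_fact_pos.
  set (a := INR (S n)).
  assert (Ha : 0 < a) by (apply lt_0_INR; lia).
  assert (Hb : INR (S (S n)) = a + 1) by (unfold a; rewrite (S_INR (S n)); ring).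
  rewrite Hb.
  assert (K : (x + a + 1) * Rpower a x <= (a+1) * Rpower (a+1) x).
  { unfold Rpower.
    assert (Hl : ln (a+1) - ln a >= 1/(a+1)).
    { assert (H := ln_le_sub1 (a / (a+1))).
      rewrite ln_div in H by lra.
      assert (a/(a+1) - 1 = - (1/(a+1))) by (field; lra).
      assert (0 < a/(a+1)) by (apply Rdiv_lt_0_compat; lra). lra. }
    assert (E : exp (x * ln (a+1)) = exp (x * ln a) * exp (x * (ln (a+1) - ln a))).
    { rewrite <- exp_plus. f_equal. ring. }
    rewrite E.
    assert (E2 : exp (x * (ln (a + 1) - ln a)) >= 1 + x / (a+1)).
    { assert (H := exp_ineq1_le (x * (ln (a + 1) - ln a))).
      assert (x * (ln (a + 1) - ln a) >= x * (1/(a+1))).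
      { apply Rle_ge. apply Rmult_le_compat_l; lra. }
      assert (x / (a+1) = x * (1/(a+1))) by (field; lra). lra. }
    assert (Hp := exp_pos (x * ln a)).
    assert ((a+1) * (1 + x/(a+1)) = x + a + 1) by (field; lra).
    assert ((a + 1) * (exp (x * ln a) * exp (x * (ln (a + 1) - ln a))) >=
            (a+1) * (exp (x * ln a) * (1 + x/(a+1)))).
    { apply Rle_ge. apply Rmult_le_compat_l; [lra|]. apply Rmult_le_compat_l; lra. }
    nra. }
  assert (H1 := Rpower_pos a x). assert (H2 := Rpower_pos (a+1) x).
  apply Rge_le. 
  replace (P * (x + (a + 1)) / ((a + 1) * F * Rpower (a + 1) x))
    with ((P / (F * Rpower a x)) * ((x + a + 1) * Rpower a x / ((a+1) * Rpower (a+1) x)))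
    by (field; repeat split; lra).
  apply Rle_ge.
  assert (0 <= P / (F * Rpower a x)).
  { apply Rmult_le_pos; auto. left. apply Rinv_0_lt_compat. nra. }
  assert ((x + a + 1) * Rpower a x / ((a + 1) * Rpower (a + 1) x) <= 1).
  { apply (Rmult_le_reg_r ((a + 1) * Rpower (a + 1) x)). nra.
    unfold Rdiv. rewrite Rmult_assoc, Rinv_l by nra. lra. }
  replace (P / (F * Rpower a x)) with (P / (F * Rpower a x) * 1) at 2 by ring.
  apply Rmult_le_compat_l; auto.
Qed.

Lemma eventually_big (x : R) : exists N : nat, forall n, (N <= n)%nat -> x < INR n.
Proof.
  destruct (archimed (Rabs x)) as [H1 H2].
  exists (Z.to_nat (up (Rabs x))). intros n Hn.
  apply le_INR in Hn. rewrite INR_IZR_INZ, Z2Nat.id in Hn.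
  - assert (x <= Rabs x) by apply RRle_abs. lra.
  - apply le_IZR. assert (0 <= Rabs x) by apply Rabs_pos. lra.
Qed.

Lemma cv_step x l : Un_cv (gauss_rgamma_seq (x+1)) l -> Un_cv (gauss_rgamma_seq x) (x*l).
Proof.
  intros H. apply is_lim_seq_Reals in H. apply is_lim_seq_Reals.
  assert (Hu : is_lim_seq (fun n => INR n + (x+2)) p_infty).
  { eapply is_lim_seq_plus. apply is_lim_seq_INR. apply is_lim_seq_const. reflexivity. }
  assert (Hv : is_lim_seq (fun n => / (INR n + (x+2))) 0).
  { replace (Finite 0) with (Rbar_inv p_infty) by reflexivity.
    apply is_lim_seq_inv; auto. discriminate. }
  assert (Hr : is_lim_seq (fun n => 1 - (x+1) * / (INR n + (x+2))) (1 - (x+1)*0)).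
  { apply is_lim_seq_minus'. apply is_lim_seq_const.
    apply (is_lim_seq_scal_l _ (x+1) 0) in Hv. simpl in Hv. exact Hv. }
  assert (Hm : is_lim_seq (fun n => x * gauss_rgamma_seq (x+1) n * (1 - (x+1) * / (INR n + (x+2))))
                 (x * l * (1 - (x+1)*0))).
  { apply is_lim_seq_mult'; auto.
    apply (is_lim_seq_scal_l _ x l) in H. simpl in H. exact H. }
  replace (x * l) with (x * l * (1 - (x+1)*0)) by ring.
  eapply is_lim_seq_ext_loc; [|exact Hm].
  destruct (eventually_big (Rabs x)) as [N HN]. exists N. intros n Hn.
  specialize (HN n Hn). assert (x >= - Rabs x) by (assert (-x <= Rabs x) by (rewrite <- Rabs_Ropp; apply RRle_abs); lra).
  assert (Hd : INR n + (x + 2) <> 0) by lra.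
  assert (E := gauss_rec x n).
  apply (Rmult_eq_reg_r (INR n + (x+2))); auto.
  replace (gauss_rgamma_seq x n * (INR n + (x + 2))) with (gauss_rgamma_seq x n * (x + INR n + 2)) by ring.
  rewrite E. field. auto.
Qed.

Lemma gauss_cv x : exists l, Un_cv (gauss_rgamma_seq x) l.
Proof.
  destruct (eventually_big (-x)) as [N HN].
  specialize (HN N (Nat.le_refl _)).
  revert x HN. induction N; intros x HN.
  - simpl in HN. destruct (decreasing_cv _ (gauss_decr x ltac:(lra))) as [l Hl].
    + exists 0. intros y [i ->]. unfold opp_seq. assert (0 <= gauss_rgamma_seq x i) by (apply gauss_nonneg; lra). lra.
    + exists l; auto.
  - destruct (IHN (x+1)) as [l Hl]. rewrite S_INR in HN. lra.
    exists (x*l). apply cv_step; auto.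
Qed.

Lemma rgamma_spec x : Un_cv (gauss_rgamma_seq x) (rgamma x).
Proof.
  unfold rgamma. apply epsilon_spec. apply gauss_cv.
Qed.

Lemma rgamma_rec x : rgamma x = x * rgamma (x+1).
Proof.
  apply (UL_sequence (gauss_rgamma_seq x)). apply rgamma_spec.
  apply cv_step. apply rgamma_spec.
Qed.

Lemma G0 : rgamma 0 = 0.
Proof. rewrite rgamma_rec. ring. Qed.

Lemma G_nonpos z : (z <= 0)%Z -> rgamma (IZR z) = 0.
Proof.
  intros Hz. replace z with (- Z.of_nat (Z.to_nat (- z)))%Z by lia.
  generalize (Z.to_nat (-z)). intros k. induction k.
  - simpl. apply G0.
  - rewrite rgamma_rec. rewrite Nat2Z.inj_succ.
    replace (IZR (- Z.succ (Z.of_nat k)) + 1) with (IZR (- Z.of_nat k)).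
    + rewrite IHk. ring.
    + rewrite !opp_IZR, succ_IZR. ring.
Qed.

Lemma rising_eq t b : rising t b = rgamma t / rgamma (t + b).
Proof.
  unfold rising. destruct (Req_EM_T t 0); auto. subst. rewrite G0. unfold Rdiv. ring.
Qed.

Lemma power_rule x g : (x - 1 + g <> 0 \/ rgamma x = 0) ->
  rising x g - rising (x-1) g = g * rising x (g-1).
Proof.
  intros H. rewrite !rising_eq.
  assert (E1 : rgamma (x-1) = (x-1) * rgamma x).
  { rewrite rgamma_rec. f_equal. f_equal. ring. }
  assert (E2 : rgamma (x-1+g) = (x-1+g) * rgamma (x+g)).
  { rewrite rgamma_rec. f_equal. f_equal. ring. }
  replace (x + (g - 1)) with (x - 1 + g) by ring.
  rewrite E1, E2.
  destruct (Req_dec (rgamma (x+g)) 0) as [Z|Z].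
  - rewrite Z. rewrite Rmult_0_r. unfold Rdiv. rewrite Rinv_0. ring.
  - destruct H as [H|H].
    + field. auto.
    + rewrite H. unfold Rdiv. ring.
Qed.

Lemma nabla_pow_local k g1 g2 t :
  (forall i, (i <= k)%nat -> g1 (t - INR i) = g2 (t - INR i)) ->
  nabla_pow k g1 t = nabla_pow k g2 t.
Proof.
  revert t. induction k; intros t H.
  - simpl. specialize (H 0%nat (Nat.le_refl _)). simpl in H. rewrite Rminus_0_r in H. auto.
  - simpl. unfold nabla. rewrite (IHk t), (IHk (t-1)); [reflexivity| |].
    + intros i Hi. replace (t - 1 - INR i) with (t - INR (S i)) by (rewrite S_INR; ring).
      apply H. lia.
    + intros i Hi. apply H. lia.
Qed.

Lemma nabla_pow_minus k g1 g2 t :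
  nabla_pow k (fun s => g1 s - g2 s) t = nabla_pow k g1 t - nabla_pow k g2 t.
Proof.
  revert t. induction k; intros t; simpl; auto.
  unfold nabla. rewrite !IHk. ring.
Qed.

Lemma nabla_pow_plus k g1 g2 t :
  nabla_pow k (fun s => g1 s + g2 s) t = nabla_pow k g1 t + nabla_pow k g2 t.
Proof.
  revert t. induction k; intros t; simpl; auto.
  unfold nabla. rewrite !IHk. ring.
Qed.

Lemma nabla_pow_scal k g K t :
  nabla_pow k (fun s => g s * K) t = nabla_pow k g t * K.
Proof.
  revert t. induction k; intros t; simpl; auto.
  unfold nabla. rewrite !IHk. ring.
Qed.

Lemma nabla_pow_zero k t : nabla_pow k (fun _ => 0) t = 0.
Proof.
  revert t. induction k; intros t; simpl; auto.
  unfold nabla. rewrite !IHk. ring.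
Qed.

Lemma nabla_pow_sum k p H t :
  nabla_pow k (fun s => rsum p (fun j => H j s)) t = rsum p (fun j => nabla_pow k (H j) t).
Proof.
  induction p; simpl.
  - apply nabla_pow_zero.
  - rewrite nabla_pow_plus. rewrite IHp. auto.
Qed.

Lemma nabla_pow_add m k g : nabla_pow m (nabla_pow k g) = nabla_pow (m + k) g.
Proof.
  induction m; simpl; auto. rewrite IHm. auto.
Qed.

Lemma nabla_pow_nabla k g : nabla_pow k (nabla g) = nabla_pow (S k) g.
Proof.
  change (nabla g) with (nabla_pow 1 g). rewrite nabla_pow_add. f_equal. lia.
Qed.

Lemma rsum_ext n F1 F2 : (forall j, (1 <= j <= n)%nat -> F1 j = F2 j) -> rsum n F1 = rsum n F2.
Proof.
  induction n; intros H; simpl; auto.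
  rewrite IHn, H; [reflexivity|lia|]. intros; apply H; lia.
Qed.

Lemma rsum_shift n F : rsum (S n) F = F 1%nat + rsum n (fun j => F (S j)).
Proof.
  induction n.
  - simpl. ring.
  - change (rsum (S (S n)) F) with (rsum (S n) F + F (S (S n))).
    rewrite IHn. simpl. ring.
Qed.

Lemma rsum_minus n F1 F2 : rsum n (fun j => F1 j - F2 j) = rsum n F1 - rsum n F2.
Proof. induction n; simpl; [ring|]. rewrite IHn. ring. Qed.

Lemma rsum_scal n F K : rsum n (fun j => K * F j) = K * rsum n F.
Proof. induction n; simpl; [ring|]. rewrite IHn. ring. Qed.

Lemma rsum_zero n F : (forall j, (1 <= j <= n)%nat -> F j = 0) -> rsum n F = 0.
Proof.
  intros H. rewrite (rsum_ext n F (fun _ => 0)); auto.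
  clear. induction n; simpl; auto. rewrite IHn. ring.
Qed.

Lemma npoints_Z c z : npoints c (c + IZR z) = Z.to_nat z.
Proof.
  unfold npoints. replace (c + IZR z - c) with (IZR z) by ring.
  rewrite <- (Int_part_spec (IZR z) z); auto. lra.
Qed.

Lemma sbp n A g :
  rsum (S n) (fun j => A j * (g j - g (pred j))) =
  rsum (S n) (fun j => A j * g j) - A 1%nat * g 0%nat - rsum n (fun j => A (S j) * g j).
Proof.
  rewrite (rsum_ext _ _ (fun j => A j * g j - A j * g (pred j))) by (intros; ring).
  rewrite rsum_minus. rewrite (rsum_shift n (fun j => A j * g (pred j))). simpl. ring.
Qed.

Lemma lemA c gam f z :
  nabla_frac_sum c gam (nabla f) (c + IZR z) =
  nabla (nabla_frac_sum c gam f) (c + IZR z) - rising (IZR z) (gam-1) * rgamma gam * f c.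
Proof.
  unfold nabla at 2. unfold nabla_frac_sum.
  replace (c + IZR z - 1) with (c + IZR (z - 1)) by (rewrite minus_IZR; ring).
  rewrite !npoints_Z.
  destruct (Z_le_gt_dec z 0) as [Hz|Hz].
  - replace (Z.to_nat z) with 0%nat by lia. replace (Z.to_nat (z-1)) with 0%nat by lia.
    rewrite rising_eq, G_nonpos by auto. simpl. unfold Rdiv. ring.
  - replace z with (Z.of_nat (S (Z.to_nat (z - 1)))) by lia.
    set (M := Z.to_nat (z-1)).
    replace (Z.to_nat (Z.of_nat (S M))) with (S M) by lia.
    replace (Z.to_nat (Z.of_nat (S M) - 1)) with M by lia.
    rewrite <- !INR_IZR_INZ.
    set (A := fun j => rising (INR (S M) + 1 - INR j) (gam - 1)).
    set (g := fun j => f (c + INR j)).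
    rewrite (rsum_ext (S M) (fun j => rising (c + INR (S M) - (c + INR j - 1)) (gam - 1) * nabla f (c + INR j))
                       (fun j => A j * (g j - g (pred j)))).
    2:{ intros j Hj. unfold A, g. unfold nabla. destruct j as [|j]; [lia|].
        f_equal. f_equal. ring. simpl pred. f_equal. f_equal. rewrite S_INR; ring. }
    rewrite (rsum_ext (S M) (fun j => rising (c + INR (S M) - (c + INR j - 1)) (gam - 1) * f (c + INR j))
               (fun j => A j * g j)).
    2:{ intros j Hj. unfold A, g. f_equal. f_equal. ring. }
    rewrite (rsum_ext M _ (fun j => A (S j) * g j)).
    2:{ intros j Hj. unfold A, g. f_equal. f_equal. rewrite minus_IZR, <- INR_IZR_INZ, !S_INR. ring. }
    rewrite sbp.
    replace (A 1%nat) with (rising (INR (S M)) (gam - 1)).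
    2:{ unfold A. f_equal. simpl. ring. }
    unfold g. simpl (INR 0). rewrite Rplus_0_r. ring.
Qed.

Fixpoint coef (b : R) (j : nat) : R :=
  match j with O => 1 | S j' => coef b j' * (b - INR j') end.

Definition nonint (b : R) := forall w : Z, b <> IZR w.

Lemma lemB c b j z :
  nonint b \/ (-1 < b /\ (Z.of_nat j + 1 <= z)%Z) ->
  nabla_pow j (fun s => rising (s - c) b) (c + IZR z) = coef b j * rising (IZR z) (b - INR j).
Proof.
  revert z. induction j; intros z Hc.
  - simpl. replace (c + IZR z - c) with (IZR z) by ring. rewrite Rminus_0_r. ring.
  - simpl nabla_pow. unfold nabla.
    replace (c + IZR z - 1) with (c + IZR (z - 1)) by (rewrite minus_IZR; ring).
    rewrite !IHj.
    2-3: destruct Hc as [Hc|Hc]; [left; auto|right; split; [tauto|]; destruct Hc as [_ Hc]; rewrite Nat2Z.inj_succ in Hc; lia].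
    rewrite minus_IZR.
    replace (coef b j * rising (IZR z) (b - INR j) - coef b j * rising (IZR z - 1) (b - INR j))
      with (coef b j * (rising (IZR z) (b - INR j) - rising (IZR z - 1) (b - INR j))) by ring.
    rewrite power_rule.
    + simpl coef. replace (b - INR j - 1) with (b - INR (S j)) by (rewrite S_INR; ring). ring.
    + left. destruct Hc as [Hc|[Hb Hz]].
      * intros E. apply (Hc (1 - z + Z.of_nat j)%Z). rewrite plus_IZR, minus_IZR, <- INR_IZR_INZ. lra.
      * apply IZR_le in Hz. rewrite plus_IZR, <- INR_IZR_INZ, S_INR in Hz. lra.
Qed.

Lemma lemC b j : rgamma (b + 1) * coef b j = rgamma (b + 1 - INR j).
Proof.
  induction j.
  - simpl. rewrite Rmult_1_r, Rminus_0_r. reflexivity.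
  - simpl coef. rewrite <- Rmult_assoc, IHj.
    rewrite S_INR.
    replace (b + 1 - (INR j + 1)) with (b - INR j) by ring.
    rewrite (rgamma_rec (b - INR j)).
    replace (b - INR j + 1) with (b + 1 - INR j) by ring. ring.
Qed.

Lemma lemD al (Hal : 0 < al) c p : forall f t z, t = c + IZR z ->
  (nonint al \/ (Z.of_nat p <= z)%Z) ->
  nabla_frac_sum c al (nabla_pow p f) t =
  nabla_pow p (nabla_frac_sum c al f) t
  - rsum p (fun j => rising (t - c) (al - INR p + INR (j-1)) * rgamma (al + INR (j-1) - INR p + 1)
                     * nabla_pow (j-1) f c).
Proof.
  induction p; intros f t z Ht Hc.
  - simpl. ring.
  - assert (E : nabla_pow (S p) f = nabla_pow p (nabla f)) by (rewrite nabla_pow_nabla; auto).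
    rewrite E.
    rewrite (IHp (nabla f) t z Ht).
    2:{ destruct Hc as [Hc|Hc]; [left; auto|right; lia]. }
    rewrite (nabla_pow_local p (nabla_frac_sum c al (nabla f))
               (fun s => nabla (nabla_frac_sum c al f) s - rising (s - c) (al - 1) * (rgamma al * f c))).
    2:{ intros i Hi. subst t.
        replace (c + IZR z - INR i) with (c + IZR (z - Z.of_nat i)) by (rewrite minus_IZR, <- INR_IZR_INZ; ring).
        rewrite lemA. replace (c + IZR (z - Z.of_nat i) - c) with (IZR (z - Z.of_nat i)) by ring. ring. }
    rewrite nabla_pow_minus, nabla_pow_scal, nabla_pow_nabla.
    subst t. rewrite lemB.
    2:{ destruct Hc as [Hc|Hc].
        - left. intros w Hw. apply (Hc (w + 1)%Z). rewrite plus_IZR. lra.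
        - right. split; lra || lia. }
    rewrite rsum_shift.
    rewrite (rsum_ext p (fun j => rising (c + IZR z - c) (al - INR p + INR (j - 1)) *
       rgamma (al + INR (j - 1) - INR p + 1) * nabla_pow (j - 1) (nabla f) c)
       (fun j => rising (c + IZR z - c) (al - INR (S p) + INR (S j - 1)) *
       rgamma (al + INR (S j - 1) - INR (S p) + 1) * nabla_pow (S j - 1) f c)).
    2:{ intros j Hj. destruct j as [|j]; [lia|].
        replace (S (S j) - 1)%nat with (S j) by lia. replace (S j - 1)%nat with j by lia.
        rewrite nabla_pow_nabla. rewrite !S_INR. replace (al - (INR p + 1) + (INR j + 1)) with (al - INR p + INR j) by ring. replace (al + (INR j + 1) - (INR p + 1) + 1) with (al + INR j - INR p + 1) by ring. reflexivity. }
    assert (HC := lemC (al - 1) p).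
    replace (al - 1 + 1) with al in HC by ring.
    replace (rising (c + IZR z - c) (al - INR (S p) + INR (1 - 1)) *
       rgamma (al + INR (1 - 1) - INR (S p) + 1) * nabla_pow (1 - 1) f c)
      with (rising (IZR z) (al - 1 - INR p) * rgamma (al - INR p) * f c).
    2:{ simpl (1-1)%nat. simpl nabla_pow. rewrite S_INR. simpl INR.
        replace (c + IZR z - c) with (IZR z) by ring.
        replace (al - (INR p + 1) + 0) with (al - 1 - INR p) by ring.
        replace (al + 0 - (INR p + 1) + 1) with (al - INR p) by ring. reflexivity. }
    replace (al - 1 + 1 - INR p) with (al - INR p) in HC by ring.
    rewrite <- HC. ring.
Qed.

Theorem theorem2p11 (alpha : R) (p : nat) (a : R) (f : R -> R) :
  (1 <= p)%nat ->
  forall t : R, (exists m : nat, t = a + 2 * INR p - 1 + INR m) ->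
    nabla_left (a + INR p - 1) alpha (nabla_pow p f) t =
    nabla_pow p (nabla_left (a + INR p - 1) alpha f) t
    - rsum p (fun j =>
        let k := INR (j - 1) in
        rising (t - (a + INR p - 1)) (alpha - INR p + k)
        * rgamma (alpha + k - INR p + 1)
        * nabla_pow (j - 1) f (a + INR p - 1)).
Proof.
  intros Hp t [m Ht].
  set (z := Z.of_nat (p + m)).
  assert (Htz : t = (a + INR p - 1) + IZR z).
  { unfold z. rewrite <- INR_IZR_INZ, plus_INR. lra. }
  cbv zeta.
  unfold nabla_left. destruct (Rlt_dec 0 alpha) as [Hpos|Hnpos].
  - apply (lemD alpha Hpos _ p f t z Htz). right. unfold z. lia.
  - destruct (Req_EM_T alpha 0) as [H0|H0].
    + subst alpha. rewrite rsum_zero; [ring|].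
      intros j Hj. replace (0 + INR (j - 1) - INR p + 1) with (IZR (Z.of_nat j - Z.of_nat p)).
      * rewrite G_nonpos by lia. ring.
      * rewrite minus_IZR, <- !INR_IZR_INZ. replace (INR j) with (INR (j - 1) + 1). ring.
        replace j with (S (j-1)) at 2 by lia. rewrite S_INR. ring.
    + unfold nabla_frac_diff. cbv zeta.
      set (b := - alpha).
      assert (Hb : 0 < b) by (unfold b; lra).
      destruct (archimed (-b)) as [A1 A2].
      assert (Hg : greatest_int_lt b = (- up (- b))%Z) by reflexivity.
      rewrite Hg.
      set (u := up (-b)) in *.
      assert (Hu : (u <= 0)%Z). { assert (IZR u < 1) by lra. apply lt_IZR in H. lia. }
      set (n := Z.to_nat (- u + 1)).
      assert (HnR : INR n = 1 - IZR u).
      { unfold n. rewrite INR_IZR_INZ, Z2Nat.id by lia. rewrite plus_IZR, opp_IZR. ring. }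
      assert (Hn1 : (1 <= n)%nat) by (unfold n; lia).
      set (c := a + INR p - 1) in *.
      unfold nabla_frac_sum0.
      destruct (Req_EM_T (INR n - b) 0) as [Hnu|Hnu].
      * rewrite !nabla_pow_add, Nat.add_comm.
        rewrite rsum_zero; [ring|].
        intros j Hj.
        replace (alpha + INR (j - 1) - INR p + 1) with (IZR (Z.of_nat j - Z.of_nat p - Z.of_nat n)).
        -- rewrite G_nonpos by lia. ring.
        -- rewrite !minus_IZR, <- !INR_IZR_INZ.
           replace (INR j) with (INR (j - 1) + 1). unfold b in Hnu. lra.
           replace j with (S (j-1)) at 2 by lia. rewrite S_INR. ring.
      * set (nu := INR n - b) in *.
        assert (Hnu0 : 0 < nu < 1).
        { assert (0 <= nu) by (unfold nu; lra). assert (nu < 1) by (unfold nu; lra).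
          split; auto. destruct (Rle_lt_or_eq_dec 0 nu); auto. congruence. }
        assert (Hni : nonint nu).
        { intros w Hw. rewrite Hw in Hnu0. destruct Hnu0 as [H1 H2].
          apply lt_IZR in H1. apply lt_IZR in H2. lia. }
        rewrite (nabla_pow_local n (nabla_frac_sum c nu (nabla_pow p f))
           (fun s => nabla_pow p (nabla_frac_sum c nu f) s -
              rsum p (fun j => rising (s - c) (nu - INR p + INR (j-1)) *
                    (rgamma (nu + INR (j-1) - INR p + 1) * nabla_pow (j-1) f c)))).
        2:{ intros i Hi. rewrite (lemD nu ltac:(lra) c p f (t - INR i) (z - Z.of_nat i)).
            - f_equal. apply rsum_ext. intros; ring.
            - rewrite Htz, minus_IZR, <- INR_IZR_INZ. ring.
            - left; auto. }
        rewrite nabla_pow_minus, nabla_pow_sum, !nabla_pow_add, Nat.add_comm.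
        f_equal. apply rsum_ext. intros j Hj.
        rewrite nabla_pow_scal. rewrite Htz. rewrite lemB.
        2:{ left. intros w Hw. apply (Hni (w + Z.of_nat p - Z.of_nat (j-1))%Z).
            rewrite !minus_IZR, plus_IZR, <- !INR_IZR_INZ. lra. }
        assert (HC := lemC (nu - INR p + INR (j - 1)) n).
        replace (nu + INR (j - 1) - INR p + 1) with (nu - INR p + INR (j - 1) + 1) by ring.
        replace (c + IZR z - c) with (IZR z) by ring.
        replace (alpha - INR p + INR (j - 1)) with (nu - INR p + INR (j - 1) - INR n)
          by (unfold nu, b; ring).
        replace (alpha + INR (j - 1) - INR p + 1) with (nu - INR p + INR (j - 1) + 1 - INR n)
          by (unfold nu, b; ring).
        rewrite <- HC. ring.
Qed.
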